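(* Let $M$ and $N$ be conical monoids, $I$ an order-ideal of $M$, and $\varphi\colon I\to\varphi(I)$ a monoid isomorphism onto an order-ideal $\varphi(I)$ of $N$. Let $P=(M\times N)/\!\sim$, where $\sim$ is the monoid congruence on $M\times N$ generated by the pairs $((s,0),(0,\varphi(s)))$, $s\in I$, and define $\iota_1\colon M\to P$, $\iota_1(x)=[(x,0)]$, and $\iota_2\colon N\to P$, $\iota_2(y)=[(0,y)]$. Then: (1) $\iota_1,\iota_2$ form a pushout of the diagram $M\hookleftarrow I\xrightarrow{\varphi}N$ in the category of monoids; (2) $\iota_1$ and $\iota_2$ are injective; (3) $I'=\iota_1(I)=\iota_2(\varphi(I))$ is an order-ideal of $P$ and $P/I'\cong M/I\times N/\varphi(I)$; (4) if $Q$ is a conical refinement monoid and $\theta_1\colon M\to Q$, $\theta_2\colon N\to Q$ are injective monoid homomorphisms with $\theta_1|_I=\theta_2\circ\varphi$, $\theta_1(M)\cap\theta_2(N)=\theta_1(I)=\theta_2(\varphi(I))$, and $\theta_1(M),\theta_2(N)$ order-ideals of $Q$, then there is an injective monoid homomorphism $\iota\colon P\to Q$ with $\theta_i=\iota\circ\iota_i$ for $i=1,2$.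
   Context: Monoids are abelian. A monoid is conical if $x+y=0$ implies $x=y=0$. An order-ideal of $M$ is a nonempty $I\subseteq M$ with $x+y\in I\iff x,y\in I$. For an order-ideal $I$, $M/I$ is the quotient by the congruence $x\equiv y\iff x+u=y+v$ for some $u,v\in I$. A refinement monoid is one in which every $x_1+x_2=y_1+y_2$ admits $x_{ij}$ with $x_i=x_{i1}+x_{i2}$, $y_j=x_{1j}+x_{2j}$. *)

(* Defs.v *)
From Stdlib Require Import Classical ClassicalEpsilon FunctionalExtensionality
  PropExtensionality ProofIrrelevance.

Set Implicit Arguments.
Unset Strict Implicit.

Record cmonoid := CMonoid {
  carrier :> Type;
  mzero : carrier;
  madd : carrier -> carrier -> carrier;
  maddA : forall x y z, madd x (madd y z) = madd (madd x y) z;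
  maddC : forall x y, madd x y = madd y x;
  madd0 : forall x, madd x mzero = x
}.
Arguments mzero {c}.
Arguments madd {c}.
Arguments maddA {c}.
Arguments maddC {c}.
Arguments madd0 {c}.

Declare Scope mon_scope.
Delimit Scope mon_scope with mon.
Open Scope mon_scope.
Notation "x + y" := (madd x y) : mon_scope.
Notation "0" := mzero : mon_scope.

Definition is_hom (A B : cmonoid) (f : A -> B) : Prop :=
  f 0 = 0 /\ forall x y, f (x + y) = f x + f y.

Definition injective {A B : Type} (f : A -> B) : Prop :=
  forall x y, f x = f y -> x = y.

Definition bijective {A B : Type} (f : A -> B) : Prop :=
  injective f /\ forall y, exists x, f x = y.

Definition conical (M : cmonoid) : Prop :=
  forall x y : M, x + y = 0 -> x = 0 /\ y = 0.

Definition refinement (M : cmonoid) : Prop :=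
  forall x1 x2 y1 y2 : M, x1 + x2 = y1 + y2 ->
    exists x11 x12 x21 x22 : M,
      x1 = x11 + x12 /\ x2 = x21 + x22 /\ y1 = x11 + x21 /\ y2 = x12 + x22.

Definition order_ideal (M : cmonoid) (I : M -> Prop) : Prop :=
  (exists x, I x) /\ forall x y : M, I (x + y) <-> (I x /\ I y).

Definition image {A B : Type} (f : A -> B) (I : A -> Prop) : B -> Prop :=
  fun y => exists x, I x /\ f x = y.

Definition range {A B : Type} (f : A -> B) : B -> Prop :=
  fun y => exists x, f x = y.

Definition is_congruence (M : cmonoid) (E : M -> M -> Prop) : Prop :=
  (forall x, E x x) /\ (forall x y, E x y -> E y x) /\
  (forall x y z, E x y -> E y z -> E x z) /\
  (forall x y z, E x y -> E (x + z) (y + z)).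

Section Quotient.
Variables (M : cmonoid) (E : M -> M -> Prop) (HE : is_congruence E).

Definition qcar := {A : M -> Prop | exists x, A = E x}.

Definition qclass (x : M) : qcar := exist _ (E x) (ex_intro _ x eq_refl).

Definition qrep (A : qcar) : M :=
  proj1_sig (constructive_indefinite_description _ (proj2_sig A)).

Lemma qrep_spec (A : qcar) : proj1_sig A = E (qrep A).
Proof.
unfold qrep; destruct (constructive_indefinite_description _ _); assumption.
Qed.

Lemma qclass_eq x y : E x y -> qclass x = qclass y.
Proof.
destruct HE as [Hr [Hs [Ht _]]]; intro Hxy.
unfold qclass.
assert (H : E x = E y).
{ apply functional_extensionality; intro z; apply propositional_extensionality;
  split; intro H; eauto. }
apply eq_sig_hprop; [intros; apply proof_irrelevance|]. simpl; exact H.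
Qed.

Lemma qclass_rep A : qclass (qrep A) = A.
Proof.
destruct A as [A HA]; unfold qclass.
pose proof (qrep_spec (exist _ A HA)) as Hs; simpl in Hs.
apply eq_sig_hprop; [intros; apply proof_irrelevance|]. simpl; congruence.
Qed.

Lemma qrep_class x : E (qrep (qclass x)) x.
Proof.
destruct HE as [Hr [Hs _]].
pose proof (qrep_spec (qclass x)) as H; simpl in H.
apply Hs. rewrite H. apply Hr.
Qed.

Lemma addE x y x' y' : E x x' -> E y y' -> E (x + y) (x' + y').
Proof.
destruct HE as [Hr [Hs [Ht Hc]]]; intros H1 H2.
apply (Ht _ (madd x' y)); [apply Hc; auto|].
rewrite (maddC x' y), (maddC x' y'); apply Hc; auto.
Qed.

Definition qadd (A B : qcar) : qcar := qclass (qrep A + qrep B).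

Lemma qadd_class x y : qadd (qclass x) (qclass y) = qclass (x + y).
Proof. apply qclass_eq, addE; apply qrep_class. Qed.

Lemma qind (P : qcar -> Prop) : (forall x, P (qclass x)) -> forall A, P A.
Proof. intros H A; rewrite <- (qclass_rep A); apply H. Qed.

Lemma qaddA : forall A B C, qadd A (qadd B C) = qadd (qadd A B) C.
Proof.
intros A B C; revert A; apply qind; intro x; revert B; apply qind; intro y;
revert C; apply qind; intro z.
rewrite !qadd_class, maddA; reflexivity.
Qed.

Lemma qaddC : forall A B, qadd A B = qadd B A.
Proof.
intros A B; revert A; apply qind; intro x; revert B; apply qind; intro y.
rewrite !qadd_class, maddC; reflexivity.
Qed.

Lemma qadd0 : forall A, qadd A (qclass 0) = A.
Proof.
apply qind; intro x; rewrite qadd_class, madd0; reflexivity.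
Qed.

Definition quot_monoid : cmonoid :=
  @CMonoid qcar (qclass 0) qadd qaddA qaddC qadd0.

End Quotient.

Section Product.
Variables M N : cmonoid.
Definition padd (p q : M * N) : M * N := (fst p + fst q, snd p + snd q).
Lemma paddA p q r : padd p (padd q r) = padd (padd p q) r.
Proof. destruct p, q, r; unfold padd; simpl; rewrite !maddA; reflexivity. Qed.
Lemma paddC p q : padd p q = padd q p.
Proof. destruct p, q; unfold padd; simpl; rewrite (maddC c), (maddC c0); reflexivity. Qed.
Lemma padd0 p : padd p (0, 0) = p.
Proof. destruct p; unfold padd; simpl; rewrite !madd0; reflexivity. Qed.
Definition prod_monoid : cmonoid := @CMonoid (M * N) (0, 0) padd paddA paddC padd0.
End Product.

Inductive gen_cong (M : cmonoid) (R : M -> M -> Prop) : M -> M -> Prop :=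
| gc_base x y : R x y -> gen_cong R x y
| gc_refl x : gen_cong R x x
| gc_sym x y : gen_cong R x y -> gen_cong R y x
| gc_trans x y z : gen_cong R x y -> gen_cong R y z -> gen_cong R x z
| gc_add x y z : gen_cong R x y -> gen_cong R (x + z) (y + z).

Lemma gen_cong_is_congruence (M : cmonoid) (R : M -> M -> Prop) :
  is_congruence (gen_cong R).
Proof.
repeat split; [apply gc_refl | apply gc_sym | apply gc_trans | apply gc_add].
Qed.

Definition ideal_rel (M : cmonoid) (I : M -> Prop) (x y : M) : Prop :=
  exists u v, I u /\ I v /\ x + u = y + v.

Lemma ideal_rel_congruence (M : cmonoid) (I : M -> Prop) :
  order_ideal I -> is_congruence (ideal_rel I).
Proof.
intros [[a Ha] HI]; repeat split.
- intro x; exists a, a; auto.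
- intros x y [u [v [Hu [Hv H]]]]; exists v, u; auto.
- intros x y z [u [v [Hu [Hv H]]]] [u' [v' [Hu' [Hv' H']]]].
  exists (u + u'), (v' + v); repeat split; try (apply HI; auto).
  rewrite maddA, H, <- maddA, (maddC v u'), maddA, H', <- maddA.
  reflexivity.
- intros x y z [u [v [Hu [Hv H]]]]; exists u, v; repeat split; auto.
  rewrite <- !maddA, (maddC z u), (maddC z v), !maddA, H; reflexivity.
Qed.

Definition ideal_quot (M : cmonoid) (I : M -> Prop) (HI : order_ideal I)
  : cmonoid := quot_monoid (ideal_rel_congruence HI).

Section Pushout.
Variables (M N : cmonoid) (I : M -> Prop) (phi : M -> N).

Definition push_gen (p q : prod_monoid M N) : Prop :=
  exists s, I s /\ p = (s, 0) /\ q = (0, phi s).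

Definition push_cong : prod_monoid M N -> prod_monoid M N -> Prop :=
  gen_cong push_gen.

Definition pushout : cmonoid :=
  quot_monoid (gen_cong_is_congruence push_gen).

Definition iota1 (x : M) : pushout := qclass push_cong ((x, 0) : prod_monoid M N).
Definition iota2 (y : N) : pushout := qclass push_cong ((0, y) : prod_monoid M N).
End Pushout.

(* Main.v *)
Require Import Defs.
From Stdlib Require Import Classical ClassicalEpsilon FunctionalExtensionality PropExtensionality ProofIrrelevance.
Set Implicit Arguments.
Unset Strict Implicit.

Definition qlift (M Q : cmonoid) (E : M -> M -> Prop) (f : M -> Q) (A : qcar E) : Q :=
  f (qrep A).

Lemma qlift_class (M Q : cmonoid) (E : M -> M -> Prop) (HE : is_congruence E)
  (f : M -> Q) (Hresp : forall x y, E x y -> f x = f y) x :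
  qlift f (qclass E x) = f x.
Proof. unfold qlift. apply Hresp. apply (qrep_class HE). Qed.

Lemma qlift_hom (M Q : cmonoid) (E : M -> M -> Prop) (HE : is_congruence E)
  (f : M -> Q) (Hresp : forall x y, E x y -> f x = f y) (Hf : is_hom f) :
  @is_hom (quot_monoid HE) Q (qlift f).
Proof.
split.
- simpl. rewrite (qlift_class HE Hresp). apply Hf.
- intros A B. revert A. apply qind. intro x. revert B. apply qind. intro y.
  simpl. rewrite (qadd_class HE). rewrite !(qlift_class HE Hresp). apply Hf.
Qed.

Lemma qclass_inv (M : cmonoid) (E : M -> M -> Prop) (HE : is_congruence E) x y :
  qclass E x = qclass E y -> E x y.
Proof.
intro H. apply (f_equal (@proj1_sig _ _)) in H. simpl in H. rewrite H.
destruct HE as [Hr _]; apply Hr.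
Qed.

Definition oadd (X : cmonoid) (a b : option X) : option X :=
  match a, b with Some x, Some y => Some (x + y) | _, _ => None end.
Lemma oaddA (X : cmonoid) a b c : oadd a (oadd b c) = oadd (oadd a b) (c : option X).
Proof. destruct a, b, c; simpl; auto; rewrite maddA; auto. Qed.
Lemma oaddC (X : cmonoid) a b : oadd a b = oadd b (a : option X).
Proof. destruct a, b; simpl; auto; rewrite maddC; auto. Qed.
Lemma oadd0 (X : cmonoid) a : oadd a (Some (0 : X)) = a.
Proof. destruct a; simpl; auto; rewrite madd0; auto. Qed.
Definition opt_monoid (X : cmonoid) : cmonoid :=
  @CMonoid (option X) (Some 0) (@oadd X) (@oaddA X) (@oaddC X) (@oadd0 X).

Definition ext (A X : cmonoid) (K : A -> Prop) (k : A -> X) (a : A) : opt_monoid X :=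
  match excluded_middle_informative (K a) with
  | left _ => Some (k a) | right _ => None end.

Lemma ext_in (A X : cmonoid) (K : A -> Prop) (k : A -> X) a : K a -> ext K k a = Some (k a).
Proof. intro H; unfold ext; destruct excluded_middle_informative; tauto. Qed.

Lemma ideal0 (A : cmonoid) (K : A -> Prop) : order_ideal K -> K 0.
Proof. intros [[a Ha] H]. apply (H a 0). rewrite madd0; auto. Qed.

Lemma ext_hom (A X : cmonoid) (K : A -> Prop) (k : A -> X) (HK : order_ideal K)
  (Hk0 : k 0 = 0) (HkD : forall a b, K a -> K b -> k (a + b) = k a + k b) :
  is_hom (ext K k).
Proof.
split.
- rewrite ext_in by (apply ideal0; auto). rewrite Hk0; reflexivity.
- intros a b. unfold ext.
  destruct (excluded_middle_informative (K (a + b))) as [H|H];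
  destruct (excluded_middle_informative (K a)) as [Ha|Ha];
  destruct (excluded_middle_informative (K b)) as [Hb|Hb]; simpl; auto.
  + rewrite HkD; auto.
  + exfalso; apply Hb, (proj2 HK a b); auto.
  + exfalso; apply Ha, (proj2 HK a b); auto.
  + exfalso; apply Ha, (proj2 HK a b); auto.
  + exfalso; apply H, (proj2 HK a b); auto.
Qed.

Definition some_hom (X : cmonoid) : is_hom (A:=X) (B:=opt_monoid X) (@Some X).
Proof. split; reflexivity. Qed.

Lemma ideal_zero (A : cmonoid) (K : A -> Prop) (HK : order_ideal K) a :
  qclass (ideal_rel K) a = qclass (ideal_rel K) 0 -> K a.
Proof.
intro H. apply (qclass_inv (ideal_rel_congruence HK)) in H.
destruct H as [u [v [Hu [Hv E]]]].
assert (K (a + u)). { rewrite E, maddC, madd0. auto. }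
apply (proj2 HK) in H; tauto.
Qed.

Lemma qsurj (M : cmonoid) (E : M -> M -> Prop) (A : qcar E) : exists x, A = qclass E x.
Proof. exists (qrep A). symmetry. apply qclass_rep. Qed.

Lemma swap4 (X : cmonoid) (a b c d : X) : (a + b) + (c + d) = (a + c) + (b + d).
Proof.
rewrite <- !maddA. f_equal. rewrite !maddA. f_equal. apply maddC.
Qed.

Lemma zero_l (X : cmonoid) (a : X) : 0 + a = a.
Proof. rewrite maddC; apply madd0. Qed.

Theorem mainTheorem8
  (M N : cmonoid) (HMc : conical M) (HNc : conical N)
  (I : M -> Prop) (HI : order_ideal I)
  (phi : M -> N)
  (Hphi0 : phi 0%mon = 0%mon)
  (HphiD : forall s t, I s -> I t -> phi (s + t)%mon = (phi s + phi t)%mon)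
  (Hphi_inj : forall s t, I s -> I t -> phi s = phi t -> s = t)
  (HJ : order_ideal (image phi I)) :
  (* (1) pushout in the category of (abelian) monoids *)
  (is_hom (iota1 I phi) /\ is_hom (iota2 I phi) /\
   (forall s, I s -> iota1 I phi s = iota2 I phi (phi s)) /\
   (forall (Q : cmonoid) (f : M -> Q) (g : N -> Q),
      is_hom f -> is_hom g -> (forall s, I s -> f s = g (phi s)) ->
      (exists h : pushout I phi -> Q,
         is_hom h /\ (forall x, h (iota1 I phi x) = f x) /\
         (forall y, h (iota2 I phi y) = g y)) /\
      (forall h h' : pushout I phi -> Q,
         is_hom h -> (forall x, h (iota1 I phi x) = f x) ->
         (forall y, h (iota2 I phi y) = g y) ->
         is_hom h' -> (forall x, h' (iota1 I phi x) = f x) ->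
         (forall y, h' (iota2 I phi y) = g y) ->
         forall z, h z = h' z))) /\
  (* (2) *)
  (injective (iota1 I phi) /\ injective (iota2 I phi)) /\
  (* (3) *)
  ((forall z, image (iota1 I phi) I z <->
              image (iota2 I phi) (image phi I) z) /\
   exists HI' : order_ideal (image (iota1 I phi) I),
   exists h : ideal_quot HI' -> prod_monoid (ideal_quot HI) (ideal_quot HJ),
     is_hom h /\ bijective h) /\
  (* (4) *)
  (forall (Q : cmonoid) (th1 : M -> Q) (th2 : N -> Q),
     conical Q -> refinement Q ->
     is_hom th1 -> is_hom th2 -> injective th1 -> injective th2 ->
     (forall s, I s -> th1 s = th2 (phi s)) ->
     (forall q, (range th1 q /\ range th2 q) <-> image th1 I q) ->
     (forall q, image th1 I q <-> image th2 (image phi I) q) ->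
     order_ideal (range th1) -> order_ideal (range th2) ->
     exists iota : pushout I phi -> Q,
       is_hom iota /\ injective iota /\
       (forall x, th1 x = iota (iota1 I phi x)) /\
       (forall y, th2 y = iota (iota2 I phi y))).
Proof.
pose (HP := gen_cong_is_congruence (push_gen I phi)).
assert (I0 : I 0) by (apply ideal0; auto).
assert (J0 : image phi I 0) by (exists 0; auto).
assert (Hpair : forall a b c d,
  @madd (pushout I phi) (qclass (push_cong I phi) ((a, b) : prod_monoid M N))
        (qclass (push_cong I phi) ((c, d) : prod_monoid M N))
  = qclass (push_cong I phi) ((a + c, b + d) : prod_monoid M N)).
{ intros. exact (qadd_class HP ((a, b) : prod_monoid M N) (c, d)). }
assert (Hdec : forall x y, qclass (push_cong I phi) ((x, y) : prod_monoid M N)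
   = @madd (pushout I phi) (iota1 I phi x) (iota2 I phi y)).
{ intros. unfold iota1, iota2. rewrite Hpair, madd0, zero_l. reflexivity. }
assert (H1hom : is_hom (iota1 I phi)).
{ split. reflexivity. intros x y. unfold iota1. rewrite Hpair, madd0. reflexivity. }
assert (H2hom : is_hom (iota2 I phi)).
{ split. reflexivity. intros x y. unfold iota2. rewrite Hpair, madd0. reflexivity. }
assert (H12 : forall s, I s -> iota1 I phi s = iota2 I phi (phi s)).
{ intros s Hs. apply (qclass_eq HP). apply gc_base. exists s; auto. }
assert (Univ : forall (Q : cmonoid) (f : M -> Q) (g : N -> Q),
   is_hom f -> is_hom g -> (forall s, I s -> f s = g (phi s)) ->
   @is_hom (pushout I phi) Q (qlift (fun p : prod_monoid M N => f (fst p) + g (snd p))) /\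
   (forall x, qlift (fun p : prod_monoid M N => f (fst p) + g (snd p)) (iota1 I phi x) = f x) /\
   (forall y, qlift (fun p : prod_monoid M N => f (fst p) + g (snd p)) (iota2 I phi y) = g y)).
{ intros Q f g [Hf0 HfD] [Hg0 HgD] Hfg.
  assert (Hresp : forall p q, push_cong I phi p q ->
     f (fst p) + g (snd p) = f (fst q) + g (snd q)).
  { intros p q Hpq. induction Hpq.
    - destruct H as [s [Hs [-> ->]]]. cbn [fst snd]. rewrite Hf0, Hg0, madd0, zero_l. auto.
    - reflexivity.
    - auto.
    - congruence.
    - destruct x as [a b], y as [c d], z as [e k]. cbn [fst snd padd prod_monoid madd] in *.
      rewrite !HfD, !HgD, (swap4 (f a)), (swap4 (f c)). congruence. }
  assert (HF : @is_hom (prod_monoid M N) Q (fun p : prod_monoid M N => f (fst p) + g (snd p))).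
  { split. cbn [fst snd prod_monoid mzero]. rewrite Hf0, Hg0, madd0; auto.
    intros [a b] [c d]. cbn [fst snd padd prod_monoid madd]. rewrite HfD, HgD, (swap4 (f a)). reflexivity. }
  split; [|split].
  - apply (qlift_hom HP Hresp HF).
  - intro x. unfold iota1. rewrite (qlift_class HP Hresp). cbn [fst snd]. rewrite Hg0, madd0; auto.
  - intro y. unfold iota2. rewrite (qlift_class HP Hresp). cbn [fst snd]. rewrite Hf0, zero_l; auto. }
assert (Uniq : forall (Q : cmonoid) (f : M -> Q) (g : N -> Q) (h h' : pushout I phi -> Q),
         is_hom h -> (forall x, h (iota1 I phi x) = f x) ->
         (forall y, h (iota2 I phi y) = g y) ->
         is_hom h' -> (forall x, h' (iota1 I phi x) = f x) ->
         (forall y, h' (iota2 I phi y) = g y) ->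
         forall z, h z = h' z).
{ intros Q f g h h' [_ Hh] H1 H2 [_ Hh'] H1' H2'. apply qind. intros [x y].
  rewrite Hdec, Hh, Hh', H1, H2, H1', H2'. reflexivity. }

pose (J := image phi I).
pose (pinv := fun y : N => epsilon (inhabits (0:M)) (fun t => I t /\ phi t = y)).
assert (Hpinv : forall y, J y -> I (pinv y) /\ phi (pinv y) = y).
{ intros y Hy. unfold pinv. apply (epsilon_spec (inhabits (0:M)) (fun t => I t /\ phi t = y)).
  exact Hy. }
assert (Hpinv_phi : forall s, I s -> pinv (phi s) = s).
{ intros s Hs. destruct (Hpinv (phi s)) as [H1 H2]. exists s; auto. apply Hphi_inj; auto. }
assert (Hpinv0 : pinv 0 = 0).
{ rewrite <- Hphi0. apply Hpinv_phi; auto. }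
assert (HpinvD : forall a b, J a -> J b -> pinv (a + b) = pinv a + pinv b).
{ intros a b Ha Hb. destruct (Hpinv a Ha) as [Ia Pa]. destruct (Hpinv b Hb) as [Ib Pb].
  assert (Jab : J (a + b)) by (apply (proj2 HJ); auto).
  destruct (Hpinv _ Jab) as [Iab Pab].
  apply Hphi_inj; auto. apply (proj2 HI); auto.
  rewrite HphiD, Pa, Pb, Pab; auto. }
assert (Inj1 : injective (iota1 I phi)).
{ assert (Hc : forall s, I s -> Some s = ext J pinv (phi s)).
  { intros s Hs. rewrite ext_in. rewrite Hpinv_phi; auto. exists s; auto. }
  destruct (Univ (opt_monoid M) (@Some M) (ext J pinv) (some_hom M)
     (ext_hom HJ Hpinv0 HpinvD) Hc) as [_ [Hx _]].
  intros x x' E. pose proof (Hx x) as E1. rewrite E, Hx in E1. injection E1; auto. }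
assert (Inj2 : injective (iota2 I phi)).
{ assert (Hc : forall s, I s -> ext I phi s = Some (phi s)).
  { intros s Hs. apply ext_in; auto. }
  destruct (Univ (opt_monoid N) (ext I phi) (@Some N) (ext_hom HI Hphi0 HphiD)
     (some_hom N) Hc) as [_ [_ Hy]].
  intros x x' E. pose proof (Hy x) as E1. rewrite E, Hy in E1. injection E1; auto. }

assert (Himg : forall z, image (iota1 I phi) I z <-> image (iota2 I phi) (image phi I) z).
{ intro z; split.
  - intros [s [Hs <-]]. exists (phi s). split. exists s; auto. symmetry; auto.
  - intros [y [[t [Ht <-]] <-]]. exists t; auto. }
pose (CI := ideal_rel_congruence HI).
pose (CJ := ideal_rel_congruence HJ).
pose (Hm := fun p : prod_monoid M N =>
   ((qclass (ideal_rel I) (fst p), qclass (ideal_rel J) (snd p))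
    : prod_monoid (ideal_quot HI) (ideal_quot HJ))).
assert (HmHom : is_hom Hm).
{ split. reflexivity.
  intros [a b] [c d]. unfold Hm. cbn [fst snd padd madd prod_monoid].
  rewrite <- (qadd_class CI), <- (qadd_class CJ). reflexivity. }
assert (HmResp : forall p q, push_cong I phi p q -> Hm p = Hm q).
{ intros p q Hpq. induction Hpq.
  - destruct H as [s [Hs [-> ->]]]. unfold Hm. cbn [fst snd]. f_equal.
    + apply (qclass_eq CI). exists 0, s. repeat split; auto. rewrite madd0, zero_l; auto.
    + apply (qclass_eq CJ). exists (phi s), 0. repeat split; auto. exists s; auto.
      rewrite madd0, zero_l; auto.
  - reflexivity.
  - auto.
  - congruence.
  - rewrite !(proj2 HmHom). congruence. }
pose (Hb := qlift Hm : pushout I phi -> prod_monoid (ideal_quot HI) (ideal_quot HJ)).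
assert (HbHom : @is_hom (pushout I phi) _ Hb) by exact (qlift_hom HP HmResp HmHom).
assert (HbC : forall x y, Hb (qclass (push_cong I phi) ((x, y) : prod_monoid M N)) = Hm (x, y)).
{ intros. exact (qlift_class HP HmResp _). }
assert (Hb1 : forall s, I s -> Hb (iota1 I phi s) = 0).
{ intros s Hs. unfold iota1. rewrite HbC. unfold Hm. cbn [fst snd].
  change (@mzero (prod_monoid (ideal_quot HI) (ideal_quot HJ))) with
    ((qclass (ideal_rel I) 0, qclass (ideal_rel J) 0)
    : prod_monoid (ideal_quot HI) (ideal_quot HJ)).
  apply (f_equal2 (@pair _ _)); [|reflexivity].
  apply (qclass_eq CI). exists 0, s. repeat split; auto. rewrite madd0, zero_l; auto. }
assert (Lin : forall x y, I x -> J y -> image (iota1 I phi) I (qclass (push_cong I phi) ((x, y) : prod_monoid M N))).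
{ intros x y Hx Hy. destruct (Hpinv y Hy) as [Iy Py].
  exists (x + pinv y). split. apply (proj2 HI); auto.
  rewrite Hdec, (proj2 H1hom), (H12 (pinv y) Iy), Py; auto. }
assert (Lout : forall x y, Hm (x, y) = 0 -> I x /\ J y).
{ intros x y E. split.
  - apply (ideal_zero HI). exact (f_equal fst E).
  - apply (ideal_zero HJ). exact (f_equal snd E). }
assert (HI' : order_ideal (image (iota1 I phi) I)).
{ split. exists (iota1 I phi 0); exists 0; auto.
  intros z w. split.
  - destruct (qsurj z) as [[x y] ->]. destruct (qsurj w) as [[x' y'] ->].
    intros [s [Hs E]].
    assert (E0 : Hm ((x + x', y + y') : prod_monoid M N) = 0).
    { transitivity (Hm (x, y) + Hm (x', y')). exact (proj2 HmHom (x, y) (x', y')).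
      rewrite <- (Hb1 s Hs), E, (proj2 HbHom), HbC, HbC. reflexivity. }
    destruct (Lout _ _ E0) as [Ix Jy].
    apply (proj2 HI) in Ix. apply (proj2 HJ) in Jy.
    split; apply Lin; tauto.
  - intros [[s [Hs <-]] [t [Ht <-]]]. exists (s + t). split.
    apply (proj2 HI); auto. apply H1hom. }

pose (CI' := ideal_rel_congruence HI').
assert (hResp : forall z z', ideal_rel (image (iota1 I phi) I) z z' -> Hb z = Hb z').
{ intros z z' [U [V [[s [Hs <-]] [[t [Ht <-]] E]]]].
  pose proof (f_equal Hb E) as E'.
  rewrite !(proj2 HbHom), (Hb1 s Hs), (Hb1 t Ht), !madd0 in E'. exact E'. }
assert (K : forall a b w w', I w -> J w' ->
   @madd (pushout I phi) (qclass (push_cong I phi) ((a, b) : prod_monoid M N)) (iota1 I phi (w + pinv w'))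
   = qclass (push_cong I phi) ((a + w, b + w') : prod_monoid M N)).
{ intros a b w w' Hw Hw'. destruct (Hpinv w' Hw') as [Ip Pp].
  rewrite (proj2 H1hom), (H12 (pinv w') Ip), Pp, <- Hdec. apply Hpair. }
assert (Move : forall s a b, I s -> push_cong I phi ((a + s, b) : prod_monoid M N) (a, phi s + b)).
{ intros s a b Hs.
  assert (G : push_cong I phi ((s, 0) : prod_monoid M N) (0, phi s)) by (apply gc_base; exists s; auto).
  apply (gc_add ((a, b) : prod_monoid M N)) in G.
  change (push_cong I phi ((s + a, 0 + b) : prod_monoid M N) ((0 + a, phi s + b) : prod_monoid M N)) in G.
  rewrite (maddC s a), !zero_l in G. exact G. }
split.
{ split; [exact H1hom|split;[exact H2hom|split;[exact H12|]]].
  intros Q f g Hf Hg Hfg. split.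
  - destruct (Univ Q f g Hf Hg Hfg) as [A [B C]]. eexists; eauto.
  - exact (Uniq Q f g). }
split. { split; assumption. }
split.
{ split. exact Himg. exists HI'.
  exists (qlift Hb : ideal_quot HI' -> prod_monoid (ideal_quot HI) (ideal_quot HJ)).
  split. exact (qlift_hom CI' hResp HbHom).
  split.
  - intros A B EAB.
    destruct (qsurj A) as [z ->]. destruct (qsurj z) as [[x y] ->].
    destruct (qsurj B) as [z' ->]. destruct (qsurj z') as [[x' y'] ->].
    rewrite !(qlift_class CI' hResp), !HbC in EAB.
    destruct (qclass_inv CI (f_equal fst EAB : qclass (ideal_rel I) x = qclass (ideal_rel I) x'))
      as [u [v [Iu [Iv Exu]]]].
    destruct (qclass_inv CJ (f_equal snd EAB : qclass (ideal_rel J) y = qclass (ideal_rel J) y'))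
      as [u' [v' [Ju' [Jv' Eyu]]]].
    apply (qclass_eq CI').
    exists (iota1 I phi (u + pinv u')), (iota1 I phi (v + pinv v')).
    split; [|split].
    + exists (u + pinv u'). split; auto. apply (proj2 HI). split; auto. apply Hpinv; auto.
    + exists (v + pinv v'). split; auto. apply (proj2 HI). split; auto. apply Hpinv; auto.
    + rewrite K, K, Exu, Eyu; auto.
  - intros [A B]. destruct (qsurj A) as [x ->]. destruct (qsurj B) as [y ->].
    exists (qclass (ideal_rel (image (iota1 I phi) I)) (qclass (push_cong I phi) ((x, y) : prod_monoid M N))).
    rewrite (qlift_class CI' hResp), HbC. reflexivity. }
intros Q th1 th2 HQc HQr Hth1 Hth2 Ith1 Ith2 Hc Hint Himg2 R1 R2.
destruct (Univ Q th1 th2 Hth1 Hth2 Hc) as [Uh [U1 U2]].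
eexists. split; [exact Uh|split; [|split]].
2: intro; symmetry; apply U1.
2: intro; symmetry; apply U2.
intros A B EAB.
destruct (qsurj A) as [[x y] ->]. destruct (qsurj B) as [[x' y'] ->].
rewrite !Hdec, !(proj2 Uh), !U1, !U2 in EAB.
destruct (HQr _ _ _ _ EAB) as [a11 [a12 [a21 [a22 [E1 [E2 [E3 E4]]]]]]].
assert (r1 : range th1 (a11 + a12)) by (exists x; auto).
assert (r3 : range th1 (a11 + a21)) by (exists x'; auto).
assert (r2 : range th2 (a21 + a22)) by (exists y; auto).
assert (r4 : range th2 (a12 + a22)) by (exists y'; auto).
apply (proj2 R1) in r1. apply (proj2 R1) in r3.
apply (proj2 R2) in r2. apply (proj2 R2) in r4.
destruct (proj1 (Hint a12) (conj (proj2 r1) (proj1 r4))) as [s1 [Is1 Hs1]].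
destruct (proj1 (Hint a21) (conj (proj2 r3) (proj1 r2))) as [s2 [Is2 Hs2]].
destruct (proj1 r1) as [m Hm']. destruct (proj2 r2) as [n Hn].
assert (Ex : x = m + s1). { apply Ith1. rewrite (proj2 Hth1), Hm', Hs1; auto. }
assert (Ex' : x' = m + s2). { apply Ith1. rewrite (proj2 Hth1), Hm', Hs2; auto. }
assert (Ey : y = phi s2 + n).
{ apply Ith2. rewrite (proj2 Hth2), Hn, <- (Hc s2 Is2), Hs2; auto. }
assert (Ey' : y' = phi s1 + n).
{ apply Ith2. rewrite (proj2 Hth2), Hn, <- (Hc s1 Is1), Hs1; auto. }
subst x y x' y'.
apply (qclass_eq HP).
apply (@gc_trans _ _ _ (((m + s1) + s2, n) : prod_monoid M N)).
- apply gc_sym. apply Move; auto.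
- replace ((m + s1) + s2) with ((m + s2) + s1) by (rewrite <- !maddA, (maddC s1); auto).
  apply Move; auto.
Qed.
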